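(* In the setting of the structural VAR $A(L)w_t = \epsilon_t$, $A(L)=A_0+A_1L+\cdots+A_pL^p$ with $A_0$ nonsingular, partition $w_t' = (y_t', x_t')$ with $y_t$ of dimension $G$ and $x_t$ of dimension $K$, $G+K=m$, and partition conformably $A(L) = \begin{bmatrix} A_{11}(L) & A_{12}(L)\\ A_{21}(L) & A_{22}(L)\end{bmatrix}$ and $\epsilon_t' = (\epsilon_{1t}', \epsilon_{2t}')$. Suppose the prior restrictions $A_{21}(L)\equiv 0$ and $E(\epsilon_{1t}\epsilon_{2t}')=0$ hold, and that for some $g\le G$ the $g$-th row $a_g'$ of $A=[A_0,\dots,A_p]$ satisfies $a_g'\Phi_g = 0'$ for a known $(p+1)m\times R_g$ matrix $\Phi_g$. Then the $g$-th equation is identified if and only if $$\operatorname{rank}\big[(A_{11}\ \ A_{12})\Phi_g\big] = G-1,$$ where $(A_{11}\ \ A_{12})$ denotes the $G\times(p+1)m$ matrix consisting of the first $G$ rows of $A=[A_0,A_1,\dots,A_p]$.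
   Context: Two structures $A$ and $FA$ (with $F$ a nonsingular $m\times m$ matrix and errors $F\epsilon_t$) generate the same reduced form and are observationally equivalent. A nonsingular $F$ is admissible if $FA$ and $F\epsilon_t$ satisfy the same prior restrictions as $A$ and $\epsilon_t$ (here including $A_{21}(L)\equiv 0$, the zero block covariance, and for each equation its own linear restrictions). The $g$-th equation is identified if and only if for every admissible $F$ the $g$-th row of $F$ has the form $(0,\dots,0,f_{gg},0,\dots,0)$ with $f_{gg}\ne 0$. *)

(* Defs.v *)
From HB Require Import structures.
From mathcomp Require Import all_boot all_order all_algebra.
From mathcomp Require Import zify.
Set Implicit Arguments. Unset Strict Implicit. Unset Printing Implicit Defensive.
Import Order.TTheory GRing.Theory Num.Theory.
Local Open Scope ring_scope.

(* Column index of entry (., j) of the lag-i block A_i inside A = [A_0,...,A_p]. *)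
Lemma lagcol_subproof (p m : nat) (i : 'I_p.+1) (j : 'I_m) : (i * m + j < p.+1 * m)%N.
Proof. have := ltn_ord i; have := ltn_ord j; nia. Qed.

Definition lagcol (p m : nat) (i : 'I_p.+1) (j : 'I_m) : 'I_(p.+1 * m) :=
  Ordinal (lagcol_subproof i j).

Definition lag_mx (R : Type) (G K p : nat) (A : 'M[R]_(G + K, p.+1 * (G + K)))
  (i : 'I_p.+1) : 'M[R]_(G + K) :=
  \matrix_(r, c) A r (lagcol i c).

(* Prior restriction A_21(L) == 0 : lower-left K x G block of every A_i vanishes. *)
Definition block_restr (R : fieldType) (G K p : nat)
  (A : 'M[R]_(G + K, p.+1 * (G + K))) : Prop :=
  forall i : 'I_p.+1, dlsubmx (lag_mx A i) = 0.

(* Prior restriction E(eps_1t eps_2t') = 0 on the covariance matrix. *)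
Definition cov_restr (R : fieldType) (G K : nat) (Sigma : 'M[R]_(G + K)) : Prop :=
  ursubmx Sigma = 0.

Definition eq_restr (R : fieldType) (G K p : nat) (Rdim : 'I_(G + K) -> nat)
  (Phi : forall h : 'I_(G + K), 'M[R]_(p.+1 * (G + K), Rdim h))
  (A : 'M[R]_(G + K, p.+1 * (G + K))) : Prop :=
  forall h : 'I_(G + K), row h A *m Phi h = 0.

(* F admissible: FA and F eps_t (covariance F Sigma F') satisfy the same priors. *)
Definition admissible (R : fieldType) (G K p : nat) (Rdim : 'I_(G + K) -> nat)
  (Phi : forall h : 'I_(G + K), 'M[R]_(p.+1 * (G + K), Rdim h))
  (A : 'M[R]_(G + K, p.+1 * (G + K))) (Sigma : 'M[R]_(G + K))
  (F : 'M[R]_(G + K)) : Prop :=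
  [/\ F \in unitmx,
      block_restr (F *m A),
      cov_restr (F *m Sigma *m F^T)
    & eq_restr Phi (F *m A)].

Definition identified (R : fieldType) (G K p : nat) (Rdim : 'I_(G + K) -> nat)
  (Phi : forall h : 'I_(G + K), 'M[R]_(p.+1 * (G + K), Rdim h))
  (A : 'M[R]_(G + K, p.+1 * (G + K))) (Sigma : 'M[R]_(G + K))
  (g : 'I_(G + K)) : Prop :=
  forall F : 'M[R]_(G + K), admissible Phi A Sigma F ->
    (forall j : 'I_(G + K), j != g -> F g j = 0) /\ F g g != 0.

Definition pos_def (R : realFieldType) (n : nat) (S : 'M[R]_n) : Prop :=
  S^T = S /\ forall x : 'rV[R]_n, x != 0 -> 0 < (x *m S *m x^T) 0 0.

(* Main.v *)
Require Import Defs.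
From HB Require Import structures.
From mathcomp Require Import all_boot all_order all_algebra.
From mathcomp Require Import zify.
Import Order.TTheory GRing.Theory Num.Theory.
Local Open Scope ring_scope.

Lemma lag_mul (R : fieldType) G K p (F : 'M[R]_(G + K)) (A : 'M[R]_(G + K, p.+1 * (G + K))) i :
  lag_mx (F *m A) i = F *m lag_mx A i.
Proof.
apply/matrixP=> r c; rewrite !mxE; apply: eq_bigr => k _; rewrite !mxE //.
Qed.

Lemma row0_notunit (R : fieldType) n (F : 'M[R]_n) i : row i F = 0 -> F \notin unitmx.
Proof.
move=> H; apply/negP => Fu.
have: ('e_i : 'rV[R]_n) *m F = 0 by rewrite -rowE H.
move/(congr1 (mulmx^~ (invmx F))); rewrite mulmxK // mul0mx => /matrixP /(_ 0 i).
by rewrite !mxE !eqxx /= => /eqP; rewrite oner_eq0.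
Qed.

Lemma eg_ker (R : fieldType) G K p (A : 'M[R]_(G + K, p.+1 * (G + K))) (Rdim : 'I_(G + K) -> nat)
  (Phi : forall h : 'I_(G + K), 'M[R]_(p.+1 * (G + K), Rdim h)) (g : 'I_G) :
  eq_restr Phi A -> (('e_g : 'rV[R]_G) <= kermx (usubmx A *m Phi (lshift K g)))%MS.
Proof.
move=> Ae; apply/sub_kermxP; rewrite mulmxA -rowE.
have -> : row g (usubmx A) = row (lshift K g) A by apply/matrixP=> a b; rewrite !mxE.
exact: Ae.
Qed.

Lemma fwd (R : realFieldType) (G K p : nat)
  (A : 'M[R]_(G + K, p.+1 * (G + K))) (Sigma : 'M[R]_(G + K))
  (Rdim : 'I_(G + K) -> nat)
  (Phi : forall h : 'I_(G + K), 'M[R]_(p.+1 * (G + K), Rdim h))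
  (g : 'I_G) :
  lag_mx A ord0 \in unitmx ->
  pos_def Sigma ->
  block_restr A ->
  cov_restr Sigma ->
  eq_restr Phi A ->
  \rank (usubmx A *m Phi (lshift K g)) = (G - 1)%N ->
  identified Phi A Sigma (lshift K g).
Proof.
move=> A0u [_ Spd] Ab Sc Ae rk F [Fu Fb Fc Fe].
set L := lag_mx A ord0.
have L21 : dlsubmx L = 0 := Ab ord0.
have F21 : dlsubmx F = 0.
  have H : dlsubmx F *m ulsubmx L = 0.
    have := Fb ord0; rewrite lag_mul -/L.
    by rewrite -[F in F *m L]submxK -[L in _ *m L]submxK mulmx_block block_mxKdl L21 mulmx0 addr0.
  have L11u : ulsubmx L \in unitmx.
    by move: A0u; rewrite -/L -{1}[L]submxK L21 !unitmxE det_ublock unitrM => /andP[].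
  by rewrite -(mulmxK L11u (dlsubmx F)) H mul0mx.
have F22u : drsubmx F \in unitmx.
  by move: Fu; rewrite -{1}[F]submxK F21 !unitmxE det_ublock unitrM => /andP[].
have F12 : ursubmx F = 0.
  have H : ursubmx F *m drsubmx Sigma = 0.
    rewrite /cov_restr -[F]submxK -[Sigma]submxK Sc F21 tr_block_mx in Fc.
    rewrite !mulmx_block block_mxKur trmx0 !mulmx0 !add0r in Fc.
    have Tu : (drsubmx F)^T \in unitmx by rewrite unitmx_tr.
    by rewrite -(mulmxK Tu (_ *m drsubmx Sigma)) Fc mul0mx.
  apply/row_matrixP => i; rewrite row0; set x := row i (ursubmx F).
  have xS : x *m drsubmx Sigma = 0 by rewrite -row_mul H row0.
  apply/eqP; apply: contraT => xnz.
  have := Spd (row_mx 0 x); rewrite row_mx_eq0 eqxx xnz /=.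
  rewrite -[Sigma]submxK Sc mul_row_block tr_row_mx mul_row_col xS !mul0mx !add0r.
  by rewrite trmx0 !mulmx0 mul0mx addr0 mxE ltxx => /(_ isT).
set f := row g (ulsubmx F).
have rowF : row (lshift K g) F = row_mx f 0.
  apply/matrixP => a b; rewrite !mxE; case: (split_ordP b) => j ->.
    by rewrite !mxE.
  by rewrite mxE; have := congr1 (fun M : 'M[R]_(G,K) => M g j) F12; rewrite !mxE.
have fker : (f <= kermx (usubmx A *m Phi (lshift K g)))%MS.
  apply/sub_kermxP; have := Fe (lshift K g).
  by rewrite row_mul rowF -[A in row_mx f 0 *m A]vsubmxK mul_row_col mul0mx addr0 mulmxA.
have G0 : (0 < G)%N := leq_ltn_trans (leq0n g) (ltn_ord g).
have kerE : (kermx (usubmx A *m Phi (lshift K g)) <= ('e_g : 'rV[R]_G))%MS.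
  have := mxrank_leqif_sup (@eg_ker _ _ _ _ _ _ _ g Ae); case=> _ <-.
  rewrite mxrank_ker rk mxrank_delta; apply/eqP; lia.
have [a fa] : exists a, f = a *: 'e_g by apply/sub_rVP; exact: submx_trans fker kerE.
split.
  move=> j; case: (split_ordP j) => [j' -> | k ->] hne.
    have -> : F (lshift K g) (lshift K j') = f 0 j' by rewrite !mxE.
    rewrite (inj_eq (@lshift_inj _ _)) in hne.
    by rewrite fa !mxE eqxx /= (negbTE hne) mulr0.
  by have := congr1 (fun M : 'M[R]_(G,K) => M g k) F12; rewrite !mxE.
apply/negP => /eqP ha.
suff: row (lshift K g) F = 0 by move/(@row0_notunit _ _ F (lshift K g)); rewrite Fu.
have : f 0 g = 0 by rewrite !mxE.
by rewrite rowF fa !mxE !eqxx mulr1 => ->; rewrite scale0r row_mx0.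
Qed.

Lemma bwd (R : realFieldType) (G K p : nat)
  (A : 'M[R]_(G + K, p.+1 * (G + K))) (Sigma : 'M[R]_(G + K))
  (Rdim : 'I_(G + K) -> nat)
  (Phi : forall h : 'I_(G + K), 'M[R]_(p.+1 * (G + K), Rdim h))
  (g : 'I_G) :
  lag_mx A ord0 \in unitmx ->
  pos_def Sigma ->
  block_restr A ->
  cov_restr Sigma ->
  eq_restr Phi A ->
  identified Phi A Sigma (lshift K g) ->
  \rank (usubmx A *m Phi (lshift K g)) = (G - 1)%N.
Proof.
move=> A0u [_ Spd] Ab Sc Ae Hid.
set M := usubmx A *m Phi (lshift K g).
have egk := @eg_ker _ _ _ _ A Rdim Phi g Ae.
have rkk := mxrankS egk; rewrite mxrank_delta mxrank_ker in rkk.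
have rM : (\rank M <= G)%N := rank_leq_row M.
have rk1 : (1 <= G - \rank M)%N := rkk.
clear rkk.
apply/eqP; rewrite eqn_leq; apply/andP; split; first by lia.
rewrite leqNgt; apply/negP => lt.
have nsub : ~~ (kermx M <= ('e_g : 'rV[R]_G))%MS.
  apply/negP => /mxrankS; rewrite mxrank_ker mxrank_delta => h.
  have h' : (G - \rank M <= 1)%N := h; lia.
case/row_subPn: nsub => i vn.
set v := row i (kermx M) in vn.
have vk : (v <= kermx M)%MS := row_sub i _.
clearbody v.
set v' := v - v 0 g *: ('e_g : 'rV[R]_G).
have v'k : (v' <= kermx M)%MS by rewrite addmx_sub // -scaleNr scalemx_sub.
have v'g : v' 0 g = 0 by rewrite !mxE !eqxx mulr1 subrr.
have v'nz : v' != 0.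
  apply: contra vn => /eqP h.
  by rewrite (subr0_eq h) scalemx_sub // submx_refl.
clearbody v'.
have [j vj] : exists j, v' 0 j != 0.
  apply/existsP; apply: contraR v'nz => /existsPn H; apply/eqP/matrixP => a b.
  by rewrite (ord1 a) [RHS]mxE; apply/eqP; move: (H b); rewrite negbK.
have jg : j != g by apply: contraNneq vj => ->; rewrite v'g.
set d : 'cV[R]_G := delta_mx g 0.
set F := block_mx (1%:M + d *m v') 0 0 (1%:M : 'M[R]_K).
have vd : v' *m d = 0.
  by rewrite /d -colE; apply/matrixP => a b; rewrite !mxE (ord1 a) v'g.
have Fu : F \in unitmx.
  have : F *m block_mx (1%:M - d *m v') 0 0 1%:M = 1%:M.
    rewrite /F mulmx_block !mulmx0 !mul0mx !addr0 !add0r mulmx1.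
    rewrite mulmxDl mul1mx mulmxDr mulmx1 mulmxN mulmxA -(mulmxA d) vd mulmx0 mul0mx subr0.
    by rewrite subrK -scalar_mx_block.
  by case/mulmx1_unit.
have FA : F *m A = col_mx (usubmx A + d *m (v' *m usubmx A)) (dsubmx A).
  by rewrite -{1}[A]vsubmxK /F mul_block_col !mul0mx mul1mx addr0 add0r mulmxDl mul1mx mulmxA.
have rowFA : forall h, row h (F *m A) = row h A + (h == lshift K g)%:R *: (v' *m usubmx A).
  move=> h; rewrite FA; case: (split_ordP h) => [i' -> | k ->].
    rewrite rowKu (inj_eq (@lshift_inj _ _)); apply/matrixP => a b; rewrite (ord1 a).
    rewrite !mxE big_ord1 !mxE eqxx andbT.
    by [].
  have -> : (rshift G k == lshift K g) = false.
    apply/negP => /eqP /(congr1 val) /=; have := ltn_ord g; lia.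
  by rewrite rowKd row_dsubmx scale0r addr0.
have adm : admissible Phi A Sigma F.
  split => //.
  - move=> i0; rewrite lag_mul; have Li := Ab i0.
    by rewrite -[lag_mx A i0]submxK Li /F mulmx_block block_mxKdl !mul0mx mul1mx add0r.
  - rewrite /cov_restr -[Sigma]submxK Sc /F tr_block_mx !mulmx_block block_mxKur.
    by rewrite !trmx0 !(mulmx0, mul0mx, addr0, add0r).
  - move=> h; rewrite rowFA mulmxDl -scalemxAl Ae add0r.
    case: eqP => [-> | _]; last by rewrite scale0r.
    by rewrite scale1r -mulmxA; apply/sub_kermxP.
case: (Hid F adm) => H1 _.
have := H1 (lshift K j); rewrite (inj_eq (@lshift_inj _ _)) jg => /(_ isT).
rewrite /F block_mxEul !mxE big_ord1 !mxE eqxx andbT eq_sym (negbTE jg) add0r mul1r.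
by move/eqP; rewrite (negbTE vj).
Qed.

Theorem corollary2p1 (R : realFieldType) (G K p : nat)
  (A : 'M[R]_(G + K, p.+1 * (G + K))) (Sigma : 'M[R]_(G + K))
  (Rdim : 'I_(G + K) -> nat)
  (Phi : forall h : 'I_(G + K), 'M[R]_(p.+1 * (G + K), Rdim h))
  (g : 'I_G) :
  lag_mx A ord0 \in unitmx ->
  pos_def Sigma ->
  block_restr A ->
  cov_restr Sigma ->
  eq_restr Phi A ->
  identified Phi A Sigma (lshift K g) <->
  \rank (usubmx A *m Phi (lshift K g)) = (G - 1)%N.
Proof.
move=> h1 h2 h3 h4 h5; split.
  exact: bwd.
exact: fwd.
Qed.
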